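(* For every $n\ge1$ and $0\le m<n$, $S_{n,m}(0010,0021)=S_{n,m}(0011,0021)$.
   Context: An ascent in a sequence is an index $j$ with $x_j<x_{j+1}$; $\mathrm{asc}$ counts ascents. An ascent sequence of length $n$ is a sequence $x_1\cdots x_n$ of non-negative integers with $x_1=0$ and $x_i\le \mathrm{asc}(x_1\cdots x_{i-1})+1$ for $1<i\le n$. A sequence contains a pattern $\tau$ (a sequence of non-negative integers) if some subsequence is order-isomorphic to $\tau$ (same relative order, equal letters to equal letters); otherwise it avoids $\tau$. $S_{n,m}(T)$ is the number of ascent sequences of length $n$ with exactly $m$ ascents avoiding all patterns in $T$. *)

(* Defs.v *)
From mathcomp Require Import all_boot.
Set Implicit Arguments. Unset Strict Implicit. Unset Printing Implicit Defensive.

Fixpoint asc (x : seq nat) : nat :=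
  match x with
  | a :: ((b :: _) as t) => (a < b) + asc t
  | _ => 0
  end.

Definition is_ascent_seq (x : seq nat) : bool :=
  (head 0 x == 0) &&
  all (fun i => nth 0 x i <= (asc (take i x)).+1) (iota 1 (size x).-1).

Definition order_iso (s t : seq nat) : bool :=
  (size s == size t) &&
  all (fun i => all (fun j =>
     ((nth 0 s i < nth 0 s j) == (nth 0 t i < nth 0 t j)) &&
     ((nth 0 s i == nth 0 s j) == (nth 0 t i == nth 0 t j)))
     (iota 0 (size s))) (iota 0 (size s)).

Fixpoint subseqs (x : seq nat) : seq (seq nat) :=
  match x with
  | [::] => [:: [::]]
  | a :: t => let r := subseqs t in [seq a :: s | s <- r] ++ r
  end.

Definition contains (x tau : seq nat) : bool :=
  has (fun s => order_iso s tau) (subseqs x).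

Definition avoids (x tau : seq nat) : bool := ~~ contains x tau.

Fixpoint all_seqs (n b : nat) : seq (seq nat) :=
  match n with
  | 0 => [:: [::]]
  | n'.+1 => [seq a :: s | a <- iota 0 b, s <- all_seqs n' b]
  end.

(* Every ascent sequence of length n
   has entries <= n-1 < n, so it occurs exactly once in all_seqs n n. *)
Definition S (n m : nat) (T : seq (seq nat)) : nat :=
  count (fun x => [&& size x == n, is_ascent_seq x, asc x == m
                    & all (avoids x) T]) (all_seqs n n).

(* Main.v *)
Require Import Defs.
From mathcomp Require Import all_boot zify.
Set Implicit Arguments. Unset Strict Implicit. Unset Printing Implicit Defensive.

Fixpoint anypre (P : seq nat -> nat -> bool) (acc s : seq nat) : bool :=
  if s is c :: s' then P acc c || anypre P (rcons acc c) s' else false.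
Fixpoint tr (h : seq nat -> nat -> nat) (acc s : seq nat) : seq nat :=
  if s is c :: s' then h acc c :: tr h (rcons acc c) s' else [::].

Lemma anypre_cat P acc s t :
  anypre P acc (s ++ t) = anypre P acc s || anypre P (acc ++ s) t.
Proof.
elim: s acc => [|c s IH] acc /=; first by rewrite cats0.
by rewrite IH cat_rcons orbA.
Qed.

Lemma anypre_rcons P p c : anypre P [::] (rcons p c) = anypre P [::] p || P p c.
Proof. by rewrite -cats1 anypre_cat /= orbF. Qed.

Lemma tr_cat h acc s t : tr h acc (s ++ t) = tr h acc s ++ tr h (acc ++ s) t.
Proof.
elim: s acc => [|c s IH] acc /=; first by rewrite cats0.
by rewrite IH cat_rcons.
Qed.

Lemma tr_rcons h p c : tr h [::] (rcons p c) = rcons (tr h [::] p) (h p c).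
Proof. by rewrite -cats1 tr_cat cats1. Qed.

Lemma size_tr h acc s : size (tr h acc s) = size s.
Proof. by elim: s acc => [|c s IH] acc //=; rewrite IH. Qed.

Lemma anypre_ex (P : seq nat -> nat -> bool) acc s :
  reflect (exists x1 c x2, s = x1 ++ c :: x2 /\ P (acc ++ x1) c) (anypre P acc s).
Proof.
elim: s acc => [|c s IH] acc /=.
  by apply: ReflectF; case=> y1 [d [y2 [E _]]]; case: y1 E.
apply: (iffP orP).
- case=> [H|/IH [x1 [d [x2 [-> H']]]]].
    by exists [::], c, s; split => //; rewrite cats0.
  by exists (c :: x1), d, x2; split => //; rewrite -cat_rcons.
- case=> [[|a x1]] [d [x2 [/= E H]]].
    by case: E => -> ->; left; rewrite cats0 in H.
  case: E => Ec Es; subst; right; apply/IH; exists x1, d, x2; split => //.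
  by rewrite cat_rcons.
Qed.

Definition rep (p : seq nat) b := 1 < count_mem b p.
Definition low (p : seq nat) u := has (rep p) (iota 0 u.+1).
Definition F (p : seq nat) u := anypre (fun q c => low q u && (u < c)) [::] p.
Definition badA x := anypre (fun q c => F q c) [::] x.
Definition badB x := anypre (fun q c => (0 < c) && F q c.-1) [::] x.

Lemma lowP p u : reflect (exists2 b, b <= u & rep p b) (low p u).
Proof.
apply: (iffP hasP) => -[b].
  by rewrite mem_iota /= add0n ltnS => ? ?; exists b.
by move=> ? ?; exists b; rewrite // mem_iota add0n ltnS.
Qed.

Lemma rep_rcons p c b : rep (rcons p c) b = rep p b || (b == c) && (b \in p).
Proof.
rewrite /rep -cats1 count_cat /= addn0 -has_pred1 has_count.
case: eqP => [->|]; rewrite /= ?eqxx ?addn1 ?addn0 ?andbF ?orbF //.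
  by case: (count _ _) => [|[|k]].
by move=> H; case: eqP => /= [E|]; rewrite ?orbF //; case: H.
Qed.

Lemma low_rcons p c u : low (rcons p c) u = low p u || (c \in p) && (c <= u).
Proof.
apply/lowP/orP => [[b bu]|].
  rewrite rep_rcons => /orP [r|/andP [/eqP E cp]].
    by left; apply/lowP; exists b.
  by right; rewrite -E cp.
case=> [/lowP [b bu r]|/andP [cp cu]].
  by exists b; rewrite // rep_rcons r.
by exists c; rewrite // rep_rcons eqxx cp orbT.
Qed.

Lemma low_mono p u v : low p u -> u <= v -> low p v.
Proof. by case/lowP => b bu r uv; apply/lowP; exists b; rewrite // (leq_trans bu). Qed.

Lemma low_rconsW p c u : low p u -> low (rcons p c) u.
Proof. by rewrite low_rcons => ->. Qed.

Lemma low_nil u : low [::] u = false.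
Proof. by apply/lowP => -[b _]. Qed.

Lemma F_nil u : F [::] u = false.
Proof. by []. Qed.

Lemma F_rcons p c u : F (rcons p c) u = F p u || low p u && (u < c).
Proof. by rewrite /F anypre_rcons. Qed.

Lemma F_low p u : F p u -> low p u.
Proof.
elim/last_ind: p => [|p c IH]; first by [].
rewrite F_rcons => /orP [/IH|/andP [H _]]; exact: low_rconsW.
Qed.

Lemma F_rconsW p c u : F p u -> F (rcons p c) u.
Proof. by rewrite F_rcons => ->. Qed.

Definition bnd (p : seq nat) := foldr maxn 0 p.

Lemma bnd_rcons p c : bnd (rcons p c) = maxn (bnd p) c.
Proof.
rewrite /bnd; elim: p => [|a p IH] /=; first by rewrite max0n maxn0.
by rewrite IH maxnA.
Qed.

Lemma F_bnd p u : F p u -> u < bnd p.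
Proof.
elim/last_ind: p => [|p c IH]; first by [].
rewrite F_rcons bnd_rcons leq_max => /orP [/IH ->//|/andP [_ ->]]; by rewrite orbT.
Qed.

Lemma badA_rcons p c : badA (rcons p c) = badA p || F p c.
Proof. by rewrite /badA anypre_rcons. Qed.

Lemma badB_rcons p c : badB (rcons p c) = badB p || (0 < c) && F p c.-1.
Proof. by rewrite /badB anypre_rcons. Qed.

Fixpoint dn (P : nat -> bool) c := if c is c'.+1 then (if P c' then dn P c' else c) else 0.
Fixpoint upk (P : nat -> bool) k w := if k is k'.+1 then (if P w then upk P k' w.+1 else w) else w.

Lemma dn_le (P : nat -> bool) c : dn P c <= c.
Proof. elim: c => //= c IH; case: (P c) => //; exact: leqW. Qed.

Lemma dn_range (P : nat -> bool) c u : dn P c <= u < c -> P u.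
Proof.
elim: c => [|c IH] /=; first by rewrite ltn0 ?andbF.
case Pc: (P c); last by move=> /andP [H1 H2]; move: H1; rewrite leqNgt H2.
case/andP => du; rewrite ltnS leq_eqVlt => /orP [/eqP -> //|uc].
by apply: IH; rewrite du.
Qed.

Lemma dn_end (P : nat -> bool) c : (dn P c == 0) || ~~ P (dn P c).-1.
Proof. elim: c => //= c IH; case Pc: (P c) => //=; by rewrite Pc. Qed.

Lemma dn_uniq (P : nat -> bool) c c' : c' <= c -> (forall u, c' <= u < c -> P u) ->
  (c' == 0) || ~~ P c'.-1 -> dn P c = c'.
Proof.
move=> cc Hr He.
have dc := dn_le P c; have Dr := dn_range (P:=P) (c:=c); have De := dn_end P c.
move: dc Dr De; case: (dn P c) => [|d] dc Dr De.
  case: c' cc Hr He => // c' cc Hr /= He.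
  have : P c' by apply: Dr; lia.
  by rewrite (negbTE He).
case: (ltngtP d.+1 c') => // H.
- case: c' cc Hr He H => // c' cc Hr /= He H.
  have : P c' by apply: Dr; lia.
  by rewrite (negbTE He).
- have : P d by apply: Hr; lia.
  by move: De => /= /negbTE ->.
Qed.

Lemma upk_spec (P : nat -> bool) k w : (forall u, P u -> u < w + k) ->
  [/\ w <= upk P k w, ~~ P (upk P k w) & forall u, w <= u < upk P k w -> P u].
Proof.
elim: k w => [|k IH] w /= Hb.
  split=> //; first by apply/negP => /Hb; rewrite addn0 ltnn.
  by move=> u /andP [h1 h2]; exfalso; lia.
case Pw: (P w); last by split=> // [|u /andP [h1 h2]]; [rewrite Pw | exfalso; lia].
have [h1 h2 h3] : [/\ w.+1 <= upk P k w.+1, ~~ P (upk P k w.+1)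
   & forall u, w.+1 <= u < upk P k w.+1 -> P u].
  by apply: IH => u /Hb; rewrite addnS addSn.
split=> //; first exact: ltnW.
move=> u /andP [wu uu]; case: (ltngtP w u) => [lt|gt|E].
- by apply: h3; rewrite lt uu.
- exfalso; lia.
- by rewrite -E Pw.
Qed.

Lemma upk_uniq (P : nat -> bool) k w c : (forall u, P u -> u < w + k) -> w <= c -> ~~ P c ->
  (forall u, w <= u < c -> P u) -> upk P k w = c.
Proof.
move=> Hb wc Pc Hr; have [h1 h2 h3] := upk_spec Hb.
case: (ltngtP (upk P k w) c) => // H.
  by move: h2; rewrite Hr // h1 H.
by move: Pc; rewrite h3 // wc H.
Qed.

Definition phi x := tr (fun q c => dn (F q) c) [::] x.
Definition psi x := tr (fun q w => upk (F q) (bnd q) w) [::] x.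

Lemma phi_rcons p c : phi (rcons p c) = rcons (phi p) (dn (F p) c).
Proof. exact: tr_rcons. Qed.
Lemma psi_rcons p c : psi (rcons p c) = rcons (psi p) (upk (F p) (bnd p) c).
Proof. exact: tr_rcons. Qed.
Lemma size_phi p : size (phi p) = size p. Proof. exact: size_tr. Qed.
Lemma size_psi p : size (psi p) = size p. Proof. exact: size_tr. Qed.

Lemma dn_id p c : ~~ low p c -> dn (F p) c = c.
Proof.
move=> Lc; apply: dn_uniq => //; first by move=> u /andP [h1 h2]; exfalso; lia.
case: c Lc => //= c Lc; apply/negP => /F_low Lc'; case/negP: Lc.
exact: low_mono Lc' (leqnSn _).
Qed.

Lemma dn_low p c : low p c -> low p (dn (F p) c).
Proof.
move=> Lc; have := dn_le (F p) c; rewrite leq_eqVlt => /orP [/eqP -> //|H].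
by apply: F_low; apply: (@dn_range (F p) c); rewrite leqnn H.
Qed.

Lemma up_spec q w : [/\ w <= upk (F q) (bnd q) w, ~~ F q (upk (F q) (bnd q) w)
   & forall u, w <= u < upk (F q) (bnd q) w -> F q u].
Proof. by apply: upk_spec => u /F_bnd H; apply: (leq_trans H); exact: leq_addl. Qed.

Lemma up_id q w : ~~ low q w -> upk (F q) (bnd q) w = w.
Proof.
move=> Lw; apply: upk_uniq => //.
- by move=> u /F_bnd H; apply: (leq_trans H); exact: leq_addl.
- by apply/negP => /F_low; apply/negP.
- by move=> u /andP [h1 h2]; exfalso; lia.
Qed.

Lemma phi_inv p : ~~ badA p ->
  [/\ forall u, F (phi p) u = F p u, forall u, low (phi p) u = low p u,
      forall u, ~~ low p u -> (u \in phi p) = (u \in p) & ~~ badB (phi p)].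
Proof.
elim/last_ind: p => [|p c IH]; first by move=> _; split=> // u; rewrite /phi /= low_nil.
rewrite badA_rcons negb_or => /andP [/IH [HF HL HM HB] Fc].
rewrite phi_rcons; set c' := dn (F p) c.
have c'c : c' <= c := dn_le _ _.
have Hr : forall u, c' <= u < c -> F p u := fun u => dn_range (P := F p) (c := c) (u := u).
have He : (c' == 0) || ~~ F p c'.-1 := dn_end _ _.
have Lc' : low p c -> low p c' := @dn_low p c.
have Ic : ~~ low p c -> c' = c := @dn_id p c.
split.
- move=> u; rewrite !F_rcons HF HL.
  case Fu: (F p u) => //=; case: (low p u) => //=.
  apply/idP/idP => H; first exact: leq_trans H c'c.
  case: (ltnP u c') => // H'; by rewrite Hr ?H' ?H in Fu.
- move=> u; rewrite !low_rcons HL.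
  case: (boolP (low p c)) => Lc; last by rewrite (Ic Lc) HM.
  case Lu: (low p u) => //=.
  apply/idP/idP => /andP [_ H].
    by move: (low_mono (Lc' Lc) H); rewrite Lu.
  by move: (low_mono Lc H); rewrite Lu.
- move=> u; rewrite low_rcons negb_or => /andP [Lu _]; rewrite !mem_rcons !inE HM //.
  case: (boolP (low p c)) => Lc; last by rewrite (Ic Lc).
  have -> : (u == c') = false by apply/eqP => E; case/negP: Lu; rewrite E; exact: Lc' Lc.
  have -> // : (u == c) = false by apply/eqP => E; case/negP: Lu; rewrite E.
- rewrite badB_rcons negb_or HB /= HF.
  by case/orP: He => [/eqP ->|/negbTE ->] //; rewrite andbF.
Qed.

Lemma psi_inv q : ~~ badB q ->
  [/\ forall u, F (psi q) u = F q u, forall u, low (psi q) u = low q u,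
      forall u, ~~ low q u -> (u \in psi q) = (u \in q) & ~~ badA (psi q)].
Proof.
elim/last_ind: q => [|q w IH]; first by move=> _; split=> // u; rewrite /psi /= low_nil.
rewrite badB_rcons negb_or => /andP [/IH [HF HL HM HB] Fw].
rewrite psi_rcons; set c := upk (F q) (bnd q) w.
have [wc Fc Hr] := up_spec q w.
have Lc : low q w -> low q c := fun H => low_mono H wc.
have Ic : ~~ low q w -> c = w := @up_id q w.
split.
- move=> u; rewrite !F_rcons HF HL.
  case Fu: (F q u) => //=; case: (low q u) => //=.
  apply/idP/idP => H; last exact: leq_trans H wc.
  case: (ltnP u w) => // H'; by rewrite Hr ?H' ?H in Fu.
- move=> u; rewrite !low_rcons HL.
  case: (boolP (low q w)) => Lw; last by rewrite (Ic Lw) HM.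
  case Lu: (low q u) => //=.
  apply/idP/idP => /andP [_ H].
    by move: (low_mono (Lc Lw) H); rewrite Lu.
  by move: (low_mono Lw H); rewrite Lu.
- move=> u; rewrite low_rcons negb_or => /andP [Lu _]; rewrite !mem_rcons !inE HM //.
  case: (boolP (low q w)) => Lw; last by rewrite (Ic Lw).
  have -> : (u == c) = false by apply/eqP => E; case/negP: Lu; rewrite E; exact: Lc Lw.
  have -> // : (u == w) = false by apply/eqP => E; case/negP: Lu; rewrite E.
- by rewrite badA_rcons negb_or HB /= HF.
Qed.

Lemma psi_phi p : ~~ badA p -> psi (phi p) = p.
Proof.
elim/last_ind: p => [|p c IH] //.
rewrite badA_rcons negb_or => /andP [Bp Fc].
have [HF _ _ _] := phi_inv Bp.
rewrite phi_rcons psi_rcons IH //; congr rcons.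
apply: upk_uniq.
- by move=> u /F_bnd H; apply: (leq_trans H); exact: leq_addl.
- exact: dn_le.
- by rewrite HF.
- by move=> u H; rewrite HF; exact: dn_range H.
Qed.

Lemma phi_psi q : ~~ badB q -> phi (psi q) = q.
Proof.
elim/last_ind: q => [|q w IH] //.
rewrite badB_rcons negb_or => /andP [Bq Fw].
have [HF _ _ _] := psi_inv Bq.
have [wc Fc Hr] := up_spec q w.
rewrite psi_rcons phi_rcons IH //; congr rcons.
apply: dn_uniq => //.
- by move=> u H; rewrite HF; exact: Hr.
- by case: w Fw {wc Hr Fc} => //= w; rewrite HF.
Qed.

Lemma asc_cons a t : t != [::] -> asc (a :: t) = (a < head 0 t) + asc t.
Proof. by case: t. Qed.

Lemma asc_rcons2 s d c : asc (rcons (rcons s d) c) = asc (rcons s d) + (d < c).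
Proof.
elim: s => [|a s IH]; first by rewrite /= addn0.
rewrite !rcons_cons !asc_cons ?IH ?addnA //; last by case: s {IH}.
  by case: s {IH}.
by case: s {IH}.
Qed.

Lemma asc_key (G H : nat -> bool) d c d' c' :
  (forall u, G u -> H u) -> ~~ H d -> d' <= d -> (forall u, d' <= u < d -> G u) ->
  c' <= c -> (forall u, c' <= u < c -> H u) -> (c' == 0) || ~~ H c'.-1 ->
  (d' < c') = (d < c).
Proof.
move=> GH Hd dd Gr cc Hr He.
apply/idP/idP => H1.
- case: (ltnP d c) => // H2; exfalso.
  case: c' cc Hr He H1 => // c'' cc Hr /= He H1.
  have : H c'' by apply: GH; apply: Gr; lia.
  by rewrite (negbTE He).
- case: (ltnP d' c') => // H2; exfalso.
  have : H d by apply: Hr; lia.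
  by rewrite (negbTE Hd).
Qed.

Lemma phi_asc p : ~~ badA p -> asc (phi p) = asc p.
Proof.
elim/last_ind: p => [|p c IH] //.
case/lastP: p IH => [|p d] IH; first by move=> _; rewrite /phi.
rewrite badA_rcons negb_or => /andP [Bp Fc].
move: (Bp); rewrite badA_rcons negb_or => /andP [Bp' Fd].
rewrite !phi_rcons !asc_rcons2 -phi_rcons IH //; congr addn.
have h1 : forall u, F p u -> F (rcons p d) u := fun u => @F_rconsW p d u.
have h2 : ~~ F (rcons p d) d by rewrite F_rcons negb_or Fd ltnn andbF.
have K := (@asc_key (F p) (F (rcons p d)) d c (dn (F p) d) (dn (F (rcons p d)) c) h1 h2
   (dn_le _ _) (fun u => @dn_range _ _ u) (dn_le _ _) (fun u => @dn_range _ _ u) (dn_end _ _)).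
by rewrite K.
Qed.

Definition ab (p : seq nat) := if p is [::] then 0 else (asc p).+1.

Lemma ab_rcons p c : ab (rcons p c) = (asc (rcons p c)).+1.
Proof. by case: p. Qed.

Lemma asc_le s : asc s <= (size s).-1.
Proof.
elim: s => [|a [|b t] IH] //=.
move: IH => /= IH; have := leq_b1 (a < b); lia.
Qed.

Lemma ab_le p : ab p <= size p.
Proof. case: p => [|a t] //; rewrite /ab -/(asc (a :: t)); have := asc_le (a :: t); by []. Qed.

Lemma ab_mono p c : ab p <= ab (rcons p c).
Proof.
case/lastP: p => [|p d] //; rewrite !ab_rcons asc_rcons2 ltnS; exact: leq_addr.
Qed.

Lemma isasc_rcons p c : is_ascent_seq (rcons p c) = is_ascent_seq p && (c <= ab p).
Proof.
case: (altP (p =P [::])) => [->|pn]; first by rewrite /is_ascent_seq /= leqn0 andbT.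
have -> : ab p = (asc p).+1 by case: p pn.
have Hs : size p = (size p).-1 + 1 by case: p pn => //= *; rewrite addn1.
have Hh : head 0 (rcons p c) = head 0 p by case: p pn {Hs}.
rewrite /is_ascent_seq size_rcons Hh /= -andbA; congr andb.
rewrite [in iota 1 (size p)]Hs iotaD all_cat /= andbT.
have -> : 1 + (size p).-1 = size p by rewrite add1n; case: p pn {Hs Hh}.
congr andb.
  apply: eq_in_all => i; rewrite mem_iota => /andP [h1 h2].
  rewrite nth_rcons ifT; last by lia.
  rewrite -cats1 takel_cat //; lia.
rewrite nth_rcons ltnn eqxx.
by rewrite -cats1 take_size_cat.
Qed.


Lemma isasc_bnd p : is_ascent_seq p -> bnd p <= ab p.
Proof.
elim/last_ind: p => [|p c IH] //.
rewrite isasc_rcons bnd_rcons => /andP [/IH H1 H2].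
rewrite geq_max; apply/andP; split; apply: leq_trans (ab_mono p c) => //.
Qed.

Lemma isasc_lt p : is_ascent_seq p -> all (fun a => a < size p) p.
Proof.
elim/last_ind: p => [|p c IH] //.
rewrite isasc_rcons all_rcons size_rcons => /andP [/IH H1 H2].
rewrite ltnS (leq_trans H2 (ab_le p)) /=.
by apply: sub_all H1 => a /= H; apply: ltnW.
Qed.

Lemma ab_phi p : ~~ badA p -> ab (phi p) = ab p.
Proof.
case/lastP: p => [|p c] // B.
by rewrite phi_rcons !ab_rcons -phi_rcons phi_asc.
Qed.

Lemma psi_asc q : ~~ badB q -> asc (psi q) = asc q.
Proof. by move=> B; have [_ _ _ BA] := psi_inv B; rewrite -phi_asc // phi_psi. Qed.

Lemma ab_psi q : ~~ badB q -> ab (psi q) = ab q.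
Proof.
case/lastP: q => [|q c] // B.
by rewrite psi_rcons !ab_rcons -psi_rcons psi_asc.
Qed.

Lemma phi_isasc p : ~~ badA p -> is_ascent_seq p -> is_ascent_seq (phi p).
Proof.
elim/last_ind: p => [|p c IH] //.
rewrite badA_rcons negb_or isasc_rcons => /andP [Bp Fc] /andP [Ap cp].
rewrite phi_rcons isasc_rcons IH // ab_phi //=.
exact: leq_trans (dn_le _ _) cp.
Qed.

Lemma psi_isasc q : ~~ badB q -> is_ascent_seq q -> is_ascent_seq (psi q).
Proof.
elim/last_ind: q => [|q w IH] //.
rewrite badB_rcons negb_or isasc_rcons => /andP [Bq Fw] /andP [Aq wq].
rewrite psi_rcons isasc_rcons IH // ab_psi //=.
have [wc Fc Hr] := up_spec q w.
case: (ltnP w (upk (F q) (bnd q) w)) => H; last by apply: leq_trans H wq.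
have : F q (upk (F q) (bnd q) w).-1 by apply: Hr; lia.
move/F_bnd => H'; apply: leq_trans (isasc_bnd Aq); lia.
Qed.

Lemma mem_subseqs s x : (s \in subseqs x) = subseq s x.
Proof.
elim: x s => [|a x IH] s; first by case: s.
rewrite /= mem_cat IH.
case: s => [|b s]; first by rewrite sub0seq orbT.
case: eqP => [->|ne].
  rewrite (mem_map (fun u v (E : a :: u = a :: v) => congr1 behead E)) IH.
  by apply/orP/idP => [[//|/cons_subseq]|->]; [|left].
apply/orP/idP => [[/mapP [s' _ [E _]]|//]|->]; [by case: ne|by right].
Qed.

Lemma containsP x tau : reflect (exists s, subseq s x /\ order_iso s tau) (contains x tau).
Proof.
apply: (iffP hasP) => [[s]|[s [H1 H2]]].
  by rewrite mem_subseqs => H1 H2; exists s.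
by exists s; rewrite ?mem_subseqs.
Qed.

Lemma subseq_consP (d : nat) t y :
  reflect (exists y1 y2, y = y1 ++ d :: y2 /\ subseq t y2) (subseq (d :: t) y).
Proof.
elim: y => [|b y IH] /=.
  by apply: ReflectF => -[[|? ?] [? []]].
case: eqP => [->|ne].
  apply: (iffP idP) => [H|[y1 [y2 [E H]]]]; first by exists [::], y; split.
  case: y1 E => [|c y1] /= E; case: E => *; subst => //.
  by rewrite -cat_rcons; apply: (subseq_trans H (suffix_subseq _ _)).
apply: (iffP IH) => [[y1 [y2 [-> H]]]|[[|c y1] [y2 [/= [E1 E2] H]]]].
- by exists (b :: y1), y2.
- by case: ne; rewrite E1.
- by exists y1, y2; rewrite E2.
Qed.

Lemma subseq_rconsP s (d : nat) x :
  reflect (exists x1 x2, x = x1 ++ d :: x2 /\ subseq s x1) (subseq (rcons s d) x).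
Proof.
rewrite -subseq_rev rev_rcons.
apply: (iffP (subseq_consP _ _ _)) => [[y1 [y2 [E H]]]|[x1 [x2 [E H]]]].
  exists (rev y2), (rev y1); split; last by rewrite -subseq_rev revK.
  by rewrite -[x]revK E rev_cat rev_cons cat_rcons.
exists (rev x2), (rev x1); split; last by rewrite subseq_rev.
by rewrite E rev_cat rev_cons cat_rcons.
Qed.

Lemma subseq2 (b : nat) y : subseq [:: b; b] y = rep y b.
Proof.
rewrite /rep; elim: y => [|a y IH] //=.
case: eqP => [->|ne]; rewrite ?eqxx /= ?sub1seq.
  by rewrite add1n ltnS -has_pred1 has_count.
by rewrite IH; case: eqP => // E; case: ne.
Qed.

Lemma sub4P a d c x : reflect (exists x1 x2 y1 y2,
   [/\ x = x1 ++ c :: x2, x1 = y1 ++ d :: y2 & rep y1 a]) (subseq [:: a; a; d; c] x).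
Proof.
apply: (iffP (subseq_rconsP [:: a; a; d] c x)).
  move=> [x1 [x2 [E /(subseq_rconsP [:: a; a] d x1) [y1 [y2 [E' H]]]]]].
  by exists x1, x2, y1, y2; rewrite -subseq2.
move=> [x1 [x2 [y1 [y2 [E E' H]]]]]; exists x1, x2; split=> //.
by apply/(subseq_rconsP [:: a; a] d x1); exists y1, y2; rewrite subseq2.
Qed.

Lemma badAP x : reflect (exists a d c, [/\ subseq [:: a; a; d; c] x, a <= c & c < d]) (badA x).
Proof.
apply: (iffP (anypre_ex _ _ _)).
  move=> [x1 [c [x2 [E /anypre_ex [y1 [d [y2 [E' /andP [/lowP [a ac r] cd]]]]]]]]].
  exists a, d, c; split=> //; apply/sub4P; exists x1, x2, y1, y2; split=> //.
move=> [a [d [c [/sub4P [x1 [x2 [y1 [y2 [E E' r]]]]] ac cd]]]].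
exists x1, c, x2; split=> //; apply/anypre_ex; exists y1, d, y2; split=> //.
by rewrite cd andbT; apply/lowP; exists a.
Qed.

Lemma badBP x : reflect (exists a d c, [/\ subseq [:: a; a; d; c] x, a < c & c <= d]) (badB x).
Proof.
apply: (iffP (anypre_ex _ _ _)).
  move=> [x1 [c [x2 [E /andP [c0 /anypre_ex [y1 [d [y2 [E' /andP [/lowP [a ac r] cd]]]]]]]]]].
  exists a, d, c; split; [|lia|lia]; apply/sub4P; exists x1, x2, y1, y2; split=> //.
move=> [a [d [c [/sub4P [x1 [x2 [y1 [y2 [E E' r]]]]] ac cd]]]].
exists x1, c, x2; split=> //; apply/andP; split; first lia.
apply/anypre_ex; exists y1, d, y2; split=> //.
apply/andP; split; last lia.
by apply/lowP; exists a => //; lia.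
Qed.

Lemma oi10 a b d c : order_iso [:: a; b; d; c] [:: 0; 0; 1; 0] = [&& a == b, c == a & a < d].
Proof. rewrite /order_iso /=; apply/idP/idP => H; lia. Qed.
Lemma oi21 a b d c : order_iso [:: a; b; d; c] [:: 0; 0; 2; 1] = [&& a == b, a < c & c < d].
Proof. rewrite /order_iso /=; apply/idP/idP => H; lia. Qed.
Lemma oi11 a b d c : order_iso [:: a; b; d; c] [:: 0; 0; 1; 1] = [&& a == b, a < d & c == d].
Proof. rewrite /order_iso /=; apply/idP/idP => H; lia. Qed.

Lemma contains4 x tau : size tau = 4 -> contains x tau ->
  exists a b d c, subseq [:: a; b; d; c] x /\ order_iso [:: a; b; d; c] tau.
Proof.
move=> st /containsP [[|a [|b [|d [|c [|e s]]]]] [H1 H2]];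
  try by move: H2; rewrite /order_iso st.
by exists a, b, d, c.
Qed.

Lemma contA x : contains x [:: 0; 0; 1; 0] || contains x [:: 0; 0; 2; 1] = badA x.
Proof.
apply/idP/idP.
- case/orP => /contains4 [] // a [b [d [c [H]]]]; [rewrite oi10|rewrite oi21] => E;
    apply/badAP; exists a, d, c; (have E2 : b = a by lia); subst b; split=> //; lia.
- move/badAP => [a [d [c [H ac cd]]]].
  case: (ltngtP a c) ac => // [lt|eq] _.
    by apply/orP; right; apply/containsP; exists [:: a; a; d; c]; split=> //; rewrite oi21 eqxx lt cd.
  subst c; apply/orP; left; apply/containsP; exists [:: a; a; d; a]; split=> //.
  by rewrite oi10 !eqxx cd.
Qed.

Lemma contB x : contains x [:: 0; 0; 1; 1] || contains x [:: 0; 0; 2; 1] = badB x.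
Proof.
apply/idP/idP.
- case/orP => /contains4 [] // a [b [d [c [H]]]]; [rewrite oi11|rewrite oi21] => E;
    apply/badBP; exists a, d, c; (have E2 : b = a by lia); subst b; split=> //; lia.
- move/badBP => [a [d [c [H ac cd]]]].
  case: (ltngtP c d) cd => // [lt|eq] _.
    by apply/orP; right; apply/containsP; exists [:: a; a; d; c]; split=> //; rewrite oi21 eqxx ac lt.
  subst d; apply/orP; left; apply/containsP; exists [:: a; a; c; c]; split=> //.
  by rewrite oi11 !eqxx ac.
Qed.

Lemma mem_all_seqs n b x : (x \in all_seqs n b) = (size x == n) && all (fun a => a < b) x.
Proof.
elim: n x => [|n IH] x; first by case: x.
apply/allpairsP/idP => [[[a s] [/= Ha Hs ->]]|].
  by move: Ha Hs; rewrite mem_iota IH /= eqSS => -> /andP [-> ->].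
case: x => [|a s] // /andP [Hs /andP [Ha Hall]].
exists (a, s); split=> //; first by rewrite mem_iota Ha.
by rewrite IH; apply/andP; split.
Qed.

Lemma uniq_all_seqs n b : uniq (all_seqs n b).
Proof.
elim: n => [|n IH] //=.
apply: allpairs_uniq => //; first exact: iota_uniq.
by move=> [a s] [a' s'] _ _ /= [-> ->].
Qed.

Definition PA n m x := [&& size x == n, is_ascent_seq x, asc x == m & ~~ badA x].
Definition PB n m x := [&& size x == n, is_ascent_seq x, asc x == m & ~~ badB x].

Lemma count_le_AB n m : count (PA n m) (all_seqs n n) <= count (PB n m) (all_seqs n n).
Proof.
rewrite -!size_filter -(size_map phi).
apply: uniq_leq_size.
  rewrite map_inj_in_uniq ?filter_uniq ?uniq_all_seqs //.
  move=> x y; rewrite !mem_filter => /andP [/and4P [_ _ _ Bx] _] /andP [/and4P [_ _ _ By] _] E.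
  by rewrite -(psi_phi Bx) E psi_phi.
move=> y /mapP [x]; rewrite mem_filter => /andP [/and4P [sx ax mx Bx] _] ->.
have [_ _ _ BB] := phi_inv Bx.
have ay := phi_isasc Bx ax.
rewrite mem_filter /PB size_phi sx ay phi_asc // mx BB /= mem_all_seqs size_phi sx /=.
by rewrite -(eqP sx) -(size_phi x); apply: isasc_lt.
Qed.

Lemma count_le_BA n m : count (PB n m) (all_seqs n n) <= count (PA n m) (all_seqs n n).
Proof.
rewrite -!size_filter -(size_map psi).
apply: uniq_leq_size.
  rewrite map_inj_in_uniq ?filter_uniq ?uniq_all_seqs //.
  move=> x y; rewrite !mem_filter => /andP [/and4P [_ _ _ Bx] _] /andP [/and4P [_ _ _ By] _] E.
  by rewrite -(phi_psi Bx) E phi_psi.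
move=> y /mapP [x]; rewrite mem_filter => /andP [/and4P [sx ax mx Bx] _] ->.
have [_ _ _ BB] := psi_inv Bx.
have ay := psi_isasc Bx ax.
rewrite mem_filter /PA size_psi sx ay psi_asc // mx BB /= mem_all_seqs size_psi sx /=.
by rewrite -(eqP sx) -(size_psi x); apply: isasc_lt.
Qed.

Lemma count_AB n m : count (PA n m) (all_seqs n n) = count (PB n m) (all_seqs n n).
Proof. by apply/eqP; rewrite eqn_leq count_le_AB count_le_BA. Qed.


Theorem proposition3 (n m : nat) :
  1 <= n -> m < n ->
  S n m [:: [:: 0; 0; 1; 0]; [:: 0; 0; 2; 1]] =
  S n m [:: [:: 0; 0; 1; 1]; [:: 0; 0; 2; 1]].
Proof.
move=> _ _; rewrite /S.
have := count_AB n m; rewrite /=.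
move=> E.
transitivity (count (fun x => [&& size x == n, is_ascent_seq x, asc x == m & ~~ badA x]) (all_seqs n n)).
  by apply: eq_count => x /=; rewrite /avoids andbT -negb_or contA.
rewrite E; apply: eq_count => x /=; by rewrite /avoids andbT -negb_or contB.
Qed.
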